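(* Let $I\in\{0,1\}^{n\times m}$, $C\subseteq X$, $D\subseteq Y$ with $I_{ij}=1$ for every $i\in C$ and $j\in D$, and let $J$ be the restriction of $I$ to $D^{\downarrow_I}\times C^{\uparrow_I}$ (i.e. $J\subseteq D^{\downarrow_I}\times C^{\uparrow_I}$ with $\langle i,j\rangle\in J$ iff $I_{ij}=1$). Then $\mathcal{I}_{C,D}=\mathcal{B}(D^{\downarrow_I},C^{\uparrow_I},J)$.
   Context: $X=\{1,\dots,n\}$, $Y=\{1,\dots,m\}$. For a binary relation (formal context) $K\subseteq X'\times Y'$ between sets $X'$ and $Y'$, and $C\subseteq X'$, $D\subseteq Y'$: $C^{\uparrow_K}=\{j\in Y'\mid \forall i\in C: \langle i,j\rangle\in K\}$, $D^{\downarrow_K}=\{i\in X'\mid \forall j\in D: \langle i,j\rangle\in K\}$, and $\mathcal{B}(X',Y',K)=\{\langle C,D\rangle\mid C\subseteq X', D\subseteq Y', C^{\uparrow_K}=D, D^{\downarrow_K}=C\}$. The matrix $I$ is identified with the relation $\{\langle i,j\rangle\mid I_{ij}=1\}\subseteq X\times Y$, and $\mathcal{B}(I)=\mathcal{B}(X,Y,I)$, ordered by $\langle C_1,D_1\rangle\leq\langle C_2,D_2\rangle$ iff $C_1\subseteq C_2$. $\gamma(C)=\langle C^{\uparrow_I\downarrow_I},C^{\uparrow_I}\rangle$, $\mu(D)=\langle D^{\downarrow_I},D^{\downarrow_I\uparrow_I}\rangle$, and $\mathcal{I}_{C,D}=\{c\in\mathcal{B}(I)\mid\gamma(C)\leq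 c\leq\mu(D)\}$. *)

(* Defs.v *)
(* X = 'I_n, Y = 'I_m (0-based indices). *)
From mathcomp Require Import all_boot all_algebra.
Set Implicit Arguments. Unset Strict Implicit. Unset Printing Implicit Defensive.

Section FCA.
Variables (n m : nat).

(* A formal context K ⊆ X' × Y' is given by the subsets X' Y' and a boolean
   relation K on X × Y (only its values on X' × Y' matter). *)
Definition up (Xs : {set 'I_n}) (Ys : {set 'I_m}) (K : 'I_n -> 'I_m -> bool)
  (C : {set 'I_n}) : {set 'I_m} :=
  [set j in Ys | [forall i in C, K i j]].

Definition down (Xs : {set 'I_n}) (Ys : {set 'I_m}) (K : 'I_n -> 'I_m -> bool)
  (D : {set 'I_m}) : {set 'I_n} :=
  [set i in Xs | [forall j in D, K i j]].

Definition concepts (Xs : {set 'I_n}) (Ys : {set 'I_m}) (K : 'I_n -> 'I_m -> bool)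
  : {set {set 'I_n} * {set 'I_m}} :=
  [set p : {set 'I_n} * {set 'I_m} | [&& p.1 \subset Xs, p.2 \subset Ys,
              up Xs Ys K p.1 == p.2 & down Xs Ys K p.2 == p.1]].

Definition relI (I : 'M[bool]_(n, m)) : 'I_n -> 'I_m -> bool := fun i j => I i j.

Definition upI (I : 'M[bool]_(n, m)) (C : {set 'I_n}) := up setT setT (relI I) C.
Definition downI (I : 'M[bool]_(n, m)) (D : {set 'I_m}) := down setT setT (relI I) D.

Definition BI (I : 'M[bool]_(n, m)) := concepts setT setT (relI I).

Definition cle (c1 c2 : {set 'I_n} * {set 'I_m}) : bool := c1.1 \subset c2.1.

Definition gammaI (I : 'M[bool]_(n, m)) (C : {set 'I_n}) : {set 'I_n} * {set 'I_m} :=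
  (downI I (upI I C), upI I C).
Definition muI (I : 'M[bool]_(n, m)) (D : {set 'I_m}) : {set 'I_n} * {set 'I_m} :=
  (downI I D, upI I (downI I D)).

Definition intervalCD (I : 'M[bool]_(n, m)) (C : {set 'I_n}) (D : {set 'I_m}) :=
  [set c in BI I | cle (gammaI I C) c && cle c (muI I D)].

Definition restrJ (I : 'M[bool]_(n, m)) (C : {set 'I_n}) (D : {set 'I_m})
  : 'I_n -> 'I_m -> bool :=
  fun i j => [&& i \in downI I D, j \in upI I C & I i j].

End FCA.

(* Main.v *)
Require Import Defs.
From mathcomp Require Import all_boot all_algebra.

Section H.
Variables (n m : nat) (I : 'M[bool]_(n, m)).
Implicit Types (X : {set 'I_n}) (Y : {set 'I_m}).

Lemma inU X j : (j \in upI I X) = [forall i in X, I i j].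
Proof. by rewrite /upI /up inE in_setT. Qed.
Lemma inD Y i : (i \in downI I Y) = [forall j in Y, I i j].
Proof. by rewrite /downI /down inE in_setT. Qed.

Lemma galois X Y : (X \subset downI I Y) = (Y \subset upI I X).
Proof.
apply/subsetP/subsetP => H z Hz.
- rewrite inU; apply/forallP=> i; apply/implyP=> Hi.
  by move: (H i Hi); rewrite inD => /forallP/(_ z)/implyP->.
- rewrite inD; apply/forallP=> j; apply/implyP=> Hj.
  by move: (H j Hj); rewrite inU => /forallP/(_ z)/implyP->.
Qed.

Lemma upS X1 X2 : X1 \subset X2 -> upI I X2 \subset upI I X1.
Proof.
move=> S; apply/subsetP=> j; rewrite !inU => /forallP H; apply/forallP=> i.
apply/implyP=> Hi; exact: (implyP (H i) (subsetP S i Hi)).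
Qed.
Lemma downS Y1 Y2 : Y1 \subset Y2 -> downI I Y2 \subset downI I Y1.
Proof.
move=> S; apply/subsetP=> i; rewrite !inD => /forallP H; apply/forallP=> j.
apply/implyP=> Hj; exact: (implyP (H j) (subsetP S j Hj)).
Qed.
Lemma ext X : X \subset downI I (upI I X). Proof. by rewrite galois. Qed.
Lemma extY Y : Y \subset upI I (downI I Y). Proof. by rewrite -galois. Qed.
Lemma udu X : upI I (downI I (upI I X)) = upI I X.
Proof. apply/eqP; rewrite eqEsubset upS ?ext //=; exact: extY. Qed.

Lemma upJ (A C : {set 'I_n}) (B D : {set 'I_m}) X : X \subset A -> A \subset downI I D -> B \subset upI I C ->
  up A B (restrJ I C D) X = B :&: upI I X.
Proof.
move=> XA AD BC; apply/setP=> j; rewrite /up !inE /relI /=.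
case Hj: (j \in B) => //=.
apply/forallP/forallP=> H i; apply/implyP=> Hi; move: (implyP (H i) Hi).
  by rewrite /restrJ => /and3P[].
move=> Hij; rewrite /restrJ Hij andbT (subsetP (subset_trans XA AD)) //.
by rewrite (subsetP BC).
Qed.

Lemma downJ (A C : {set 'I_n}) (B D : {set 'I_m}) Y : Y \subset B -> A \subset downI I D -> B \subset upI I C ->
  down A B (restrJ I C D) Y = A :&: downI I Y.
Proof.
move=> YB AD BC; apply/setP=> i; rewrite /down !inE /relI /=.
case Hi: (i \in A) => //=.
apply/forallP/forallP=> H j; apply/implyP=> Hj; move: (implyP (H j) Hj).
  by rewrite /restrJ => /and3P[].
move=> Hij; rewrite /restrJ Hij andbT (subsetP (subset_trans YB BC)) //.
by rewrite (subsetP AD).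
Qed.
End H.
Arguments udu {n m} I X.
Arguments upJ {n m I A C B D X}.
Arguments downJ {n m I A C B D Y}.
Arguments upS {n m I}.
Arguments downS {n m I}.
Arguments galois {n m I}.


Theorem lemma3 (n m : nat) (I : 'M[bool]_(n, m)) (C : {set 'I_n}) (D : {set 'I_m}) :
  (forall i j, i \in C -> j \in D -> I i j = true) ->
  intervalCD I C D = concepts (downI I D) (upI I C) (restrJ I C D).
Proof.
move=> HCD.
have CA : C \subset downI I D.
  apply/subsetP=> i Hi; rewrite inD; apply/forallP=> j; apply/implyP=> Hj; exact: HCD.
have DB : D \subset upI I C by rewrite -galois.
apply/setP=> [[E F]]; rewrite !inE /cle /=.
apply/idP/idP.
- case/andP=> /and4P[_ _ /eqP HF /eqP HE] /andP[H1 H2].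
  have EA : E \subset downI I D by [].
  have FB : F \subset upI I C.
    rewrite -HF -(udu I C); apply: upS; exact: H1.
  rewrite EA FB /=.
  rewrite (upJ EA (subxx _) (subxx _)) (downJ FB (subxx _) (subxx _)).
  change (up setT setT (relI I) E) with (upI I E) in HF.
  change (down setT setT (relI I) F) with (downI I F) in HE.
  rewrite HF HE (setIidPr FB) (setIidPr EA) !eqxx //.
- case/and4P=> EA FB /eqP HF /eqP HE.
  rewrite (upJ EA (subxx _) (subxx _)) in HF.
  rewrite (downJ FB (subxx _) (subxx _)) in HE.
  have DF : D \subset F.
    rewrite -HF subsetI DB /= -galois; exact: EA.
  have CE : C \subset E.
    rewrite -HE subsetI CA /= galois; exact: FB.
  have EF : upI I E = F.
    by rewrite -HF; apply/esym/setIidPr; apply: upS.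
  have FE : downI I F = E.
    by rewrite -HE; apply/esym/setIidPr; apply: downS.
  rewrite !subsetT /=.
  change (up setT setT (relI I) E) with (upI I E).
  change (down setT setT (relI I) F) with (downI I F).
  rewrite EF FE !eqxx EA andbT /=.
  rewrite andbT -FE -EF; apply: downS; apply: upS; exact: CE.
Qed.
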